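(* For every integer $k\ge1$, let $W_k(x)=\sum_{n\ge1}w_{n,k}x^n$, where $w_{n,k}$ is the number of un-ordered rooted binary trees $t$ with $n$ leaves and $\gamma(t)\le k$. Then $$W_k(x)=x+\frac12W_k(x)^2+\frac12W_k(x^2)-x^{k+1},$$ and hence $$W_k(x)=1-\sqrt{1-2\varphi_k(x)},\qquad \varphi_k(x)=x+\frac{W_k(x^2)}{2}-x^{k+1}.$$
   Context: An un-ordered rooted binary tree is a rooted tree in which every internal node has exactly two children, with no order on the children (trees are considered up to isomorphism); its size is its number of leaves. A tree is a caterpillar if every node is either a leaf or has at least one leaf among its direct children. The subtree of $t$ at a node $v$ consists of $v$ and all its descendants, and $\gamma(t)$ is the largest number of leaves of a caterpillar occurring as the subtree of $t$ at some node. *)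

(* Defs.v *)
From mathcomp Require Import all_boot all_order all_algebra.
Set Implicit Arguments. Unset Strict Implicit. Unset Printing Implicit Defensive.
Import Order.TTheory GRing.Theory Num.Theory.

Inductive tree : Type := Leaf | Node of tree & tree.

Fixpoint leaves (t : tree) : nat :=
  match t with Leaf => 1 | Node l r => leaves l + leaves r end.

(* isomorphism of un-ordered rooted binary trees: children may be swapped *)
Fixpoint tree_iso (t u : tree) : bool :=
  match t, u with
  | Leaf, Leaf => true
  | Node a b, Node c d => (tree_iso a c && tree_iso b d) || (tree_iso a d && tree_iso b c)
  | _, _ => false
  end.

Definition is_leaf (t : tree) : bool := if t is Leaf then true else false.

Fixpoint caterpillar (t : tree) : bool :=
  match t with
  | Leaf => true
  | Node l r => [&& is_leaf l || is_leaf r, caterpillar l & caterpillar r]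
  end.

Fixpoint subtrees (t : tree) : seq tree :=
  t :: (match t with Leaf => [::] | Node l r => subtrees l ++ subtrees r end).

Definition gamma (t : tree) : nat :=
  \max_(s <- subtrees t | caterpillar s) leaves s.

Fixpoint enum_trees (fuel n : nat) : seq tree :=
  match fuel with
  | 0 => [::]
  | f.+1 =>
      if n == 1 then [:: Leaf] else
      flatten [seq flatten [seq [seq Node l r | r <- enum_trees f (n - i)]
                           | l <- enum_trees f i]
              | i <- iota 1 n.-1]
  end.

Definition trees_with_leaves (n : nat) : seq tree := enum_trees n n.

Definition iso_classes (s : seq tree) : nat :=
  size (foldl (fun acc t => if has (tree_iso t) acc then acc else rcons acc t) [::] s).

Definition w (n k : nat) : nat :=
  iso_classes [seq t <- trees_with_leaves n | gamma t <= k].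

Local Open Scope ring_scope.
Definition fps := nat -> rat.
Definition fps_add (f g : fps) : fps := fun n => f n + g n.
Definition fps_sub (f g : fps) : fps := fun n => f n - g n.
Definition fps_scale (c : rat) (f : fps) : fps := fun n => c * f n.
Definition fps_mul (f g : fps) : fps := fun n => \sum_(i < n.+1) f i * g (n - i)%N.
Definition fps_Xn (m : nat) : fps := fun n => (n == m)%:R.
Definition fps_one : fps := fps_Xn 0.
Definition fps_x2 (f : fps) : fps := fun n => if odd n then 0 else f n./2.
Definition is_fps_sqrt (s f : fps) : Prop := s 0%N = 1 /\ forall n, fps_mul s s n = f n.

(* W_k(x) = sum_{n>=1} w_{n,k} x^n  (w 0 k = 0) *)
Definition W (k : nat) : fps := fun n => (w n k)%:R.
Definition phi (k : nat) : fps :=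
  fps_sub (fps_add (fps_Xn 1) (fps_scale (2%:R)^-1 (fps_x2 (W k)))) (fps_Xn k.+1).

(* Main.v *)
Require Import Defs.
From HB Require Import structures.
From mathcomp Require Import all_boot all_order all_algebra.
From mathcomp Require Import zify lra.


Fixpoint enc (t : tree) : GenTree.tree unit :=
  match t with Leaf => GenTree.Leaf tt | Node l r => GenTree.Node 0 [:: enc l; enc r] end.
Fixpoint dec (g : GenTree.tree unit) : option tree :=
  match g with
  | GenTree.Leaf _ => Some Leaf
  | GenTree.Node _ [:: a; b] =>
      match dec a, dec b with Some x, Some y => Some (Node x y) | _, _ => None end
  | _ => None end.
Lemma encK : pcancel enc dec.
Proof. by elim=> [|l IHl r IHr] //=; rewrite IHl IHr. Qed.
HB.instance Definition _ := Countable.copy tree (pcan_type encK).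

Definition pk (t : tree) : nat := pickle t.
Lemma pk_inj : injective pk.
Proof. exact: pcan_inj pickleK. Qed.

Lemma eqNode a b c d : (Node a b == Node c d) = (a == c) && (b == d).
Proof.
apply/eqP/andP => [[-> ->]|[/eqP -> /eqP ->]] //.
Qed.
Lemma eqLN a b : (Leaf == Node a b) = false.
Proof. by apply/eqP. Qed.
Lemma eqNL a b : (Node a b == Leaf) = false.
Proof. by apply/eqP. Qed.

Definition mkN (a b : tree) := if (pk a <= pk b)%N then Node a b else Node b a.

Lemma mkN_eq a b c d :
  (mkN a b == mkN c d) = ((a == c) && (b == d)) || ((a == d) && (b == c)).
Proof.
rewrite /mkN.
case: ifP => h1; case: ifP => h2; rewrite eqNode -!(inj_eq pk_inj);
  move: h1 h2; set pa := pk a; set pb := pk b; set pc := pk c; set pd := pk d;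
  do ![case: eqP => ? //=]; lia.
Qed.

Fixpoint canon (t : tree) : tree :=
  match t with Leaf => Leaf | Node l r => mkN (canon l) (canon r) end.

Lemma mkN_Node a b : exists x y, mkN a b = Node x y.
Proof. rewrite /mkN; case: ifP; eauto. Qed.

Lemma canon_iso t u : tree_iso t u = (canon t == canon u).
Proof.
elim: t u => [|a IHa b IHb] [|c d] //=.
- by have [x [y ->]] := mkN_Node (canon c) (canon d); rewrite eqLN.
- by have [x [y ->]] := mkN_Node (canon a) (canon b); rewrite eqNL.
- by rewrite mkN_eq IHa IHb IHa IHb.
Qed.

Definition fstep (acc : seq tree) (t : tree) :=
  if has (tree_iso t) acc then acc else rcons acc t.

Lemma foldl_inv s acc : uniq (map canon acc) ->
  uniq (map canon (foldl fstep acc s)) /\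
  map canon (foldl fstep acc s) =i map canon acc ++ map canon s.
Proof.
elim: s acc => [|t s IH] acc Hu /=; first by split => // x; rewrite cats0.
have hasE : has (tree_iso t) acc = (canon t \in map canon acc).
  apply/hasP/mapP => [[x xa]|[x xa e]].
    by rewrite canon_iso => /eqP ->; exists x.
  by exists x; rewrite // canon_iso e.
have Hu' : uniq (map canon (fstep acc t)).
  rewrite /fstep hasE; case: ifP => // hn.
  by rewrite map_rcons rcons_uniq hn Hu.
have [H1 H2] := IH _ Hu'; split => // x; rewrite H2 /fstep hasE.
case: ifP => hin.
  rewrite !mem_cat !inE. case: (eqVneq x (canon t)) => [->|]; first by rewrite hin.
  by move=> _ /=.
by rewrite map_rcons -cats1 -catA.
Qed.

Lemma iso_classesE s : iso_classes s = size (undup (map canon s)).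
Proof.
rewrite /iso_classes -/fstep.
have [H1 H2] := foldl_inv s (nil : seq tree) isT.
rewrite -(size_map canon); apply: perm_size; apply: uniq_perm => //.
  exact: undup_uniq.
by move=> x; rewrite H2 mem_undup.
Qed.

Lemma leaves_gt0 t : (0 < leaves t)%N.
Proof. elim: t => //= l IHl r IHr; lia. Qed.

Lemma mem_enumT f n t : (n <= f)%N -> (t \in enum_trees f n) = (leaves t == n).
Proof.
elim: f n t => [|f IH] n t hn.
  by move: hn; rewrite leqn0 => /eqP ->; have := leaves_gt0 t; case: (leaves t).
rewrite /=; case: ifP => [/eqP ->|hn1].
  rewrite inE; case: t => [|l r] //=.
  rewrite eqNL /=; have := leaves_gt0 l; have := leaves_gt0 r; lia.
apply/flatten_mapP/idP => [[i]|].
  rewrite mem_iota => hi /flatten_mapP [l]; rewrite IH; last by lia.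
  move=> /eqP hl /mapP [r]; rewrite IH; last by lia.
  by move=> /eqP hr ->; rewrite /= hl hr; apply/eqP; lia.
case: t => [|l r] /=; first by move=> /eqP h; rewrite h eqxx in hn1.
move=> /eqP hlr; exists (leaves l).
  by rewrite mem_iota; have := leaves_gt0 l; have := leaves_gt0 r; lia.
apply/flatten_mapP; exists l; first by rewrite IH ?eqxx //; have := leaves_gt0 r; lia.
apply/mapP; exists r => //; rewrite IH; first by apply/eqP; lia.
have := leaves_gt0 l; lia.
Qed.

Lemma gammaL : gamma Leaf = 1%N.
Proof. by rewrite /gamma /= big_cons big_nil. Qed.

Lemma gammaN l r : gamma (Node l r) =
  maxn (if caterpillar (Node l r) then leaves (Node l r) else 0%N) (maxn (gamma l) (gamma r)).
Proof.
rewrite /gamma [subtrees _]/= big_cons big_cat /=.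
by case: ifP => _ //; rewrite max0n.
Qed.

Lemma mkN_cases a b : mkN a b = Node a b \/ mkN a b = Node b a.
Proof. rewrite /mkN; case: ifP; auto. Qed.

Lemma canon_props t :
  [/\ leaves (canon t) = leaves t, is_leaf (canon t) = is_leaf t,
      caterpillar (canon t) = caterpillar t & gamma (canon t) = gamma t].
Proof.
elim: t => [|l [Ll Il Cl Gl] r [Lr Ir Cr Gr]]; first by [].
rewrite /=; case: (mkN_cases (canon l) (canon r)) => ->.
  by rewrite !gammaN /= Ll Lr Il Ir Cl Cr Gl Gr.
rewrite !gammaN /= Ll Lr Il Ir Cl Cr Gl Gr; split => //.
- by rewrite addnC.
- by rewrite orbC (andbC (caterpillar r)).
- by rewrite orbC (andbC (caterpillar r)) addnC (maxnC (gamma r)).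
Qed.

Fixpoint canonical (t : tree) : bool :=
  match t with Leaf => true | Node l r => [&& canonical l, canonical r & (pk l <= pk r)%N] end.

Lemma canon_canonical t : canonical (canon t).
Proof.
elim: t => //= l IHl r IHr; rewrite /mkN; case: ifP => /= h; rewrite IHl IHr //=.
by apply: ltnW; rewrite ltnNge h.
Qed.

Lemma canonicalK t : canonical t -> canon t = t.
Proof.
elim: t => //= l IHl r IHr /and3P [/IHl -> /IHr -> h].
by rewrite /mkN h.
Qed.


Lemma sum_const_seq (T : Type) (s : seq T) (c : nat) : \sum_(x <- s) c = size s * c.
Proof. by elim: s => [|x s IH]; rewrite ?big_nil ?big_cons ?IH //= mulSn. Qed.

Lemma count_pairs (G : nat -> seq tree) n : (0 < n)%N ->
  (forall i, uniq (G i)) -> (forall i x, x \in G i -> leaves x = i) ->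
  2 * (\sum_(1 <= i < n) \sum_(l <- G i) \sum_(r <- G (n - i)) (pk l <= pk r : nat)) =
  \sum_(1 <= i < n) size (G i) * size (G (n - i)) + (if odd n then 0 else size (G n./2)).
Proof.
move=> n0 Gu GL.
have sym : \sum_(1 <= i < n) \sum_(l <- G i) \sum_(r <- G (n - i)) (pk l <= pk r : nat) =
           \sum_(1 <= i < n) \sum_(l <- G i) \sum_(r <- G (n - i)) (pk r <= pk l : nat).
  rewrite big_nat_rev /=; apply: eq_big_nat => i /andP [i1 iN].
  rewrite exchange_big /=.
  have -> : (1 + n - i.+1 = n - i)%N by lia.
  by have -> : (n - (n - i) = i)%N by lia.
rewrite mul2n -addnn {2}sym -big_split /=.
under eq_big_nat => i _.
  rewrite -big_split /=.
  under eq_bigr => l _.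
    rewrite -big_split /=.
    under eq_bigr => r _.
      have -> : ((pk l <= pk r) + (pk r <= pk l) = 1 + (r == l))%N.
        rewrite -(inj_eq pk_inj); case: ltngtP => // ->; rewrite eqxx.
      over.
    rewrite big_split /= sum_const_seq muln1.
    rewrite -big_mkcond /= sum1_count count_uniq_mem //.
    over.
  rewrite big_split /= sum_const_seq.
  over.
rewrite big_split /=; congr (_ + _).
idtac.
have key : forall i, \sum_(l <- G i) (l \in G (n - i) : nat) = if i == n - i then size (G i) else 0.
  move=> i; case: eqP => [<-|ne].
    rewrite (eq_big_seq (fun=> 1)) ?sum_const_seq ?muln1 //.
    by move=> l ->.
  rewrite big1_seq // => l /andP [_ lG]; case lG': (l \in G (n - i)) => //.
  by have := GL _ _ lG; have := GL _ _ lG'; lia.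
under eq_bigr => i _ do rewrite key.
case: ifP => hodd.
  rewrite big1 // => i _; case: eqP => // e.
  have hn : n = (i * 2)%N by lia.
  by move: hodd; rewrite hn oddM andbF.
have hn : n = (n./2 * 2)%N.
  by rewrite -[LHS](odd_double_half n) hodd add0n -muln2.
rewrite (bigD1_seq n./2) /=; last exact: iota_uniq.
  rewrite {1}[n in n - _]hn.
  have -> : (n./2 * 2 - n./2 = n./2)%N by lia.
  rewrite eqxx big1 ?addn0 // => i ne; case: eqP => // e.
  have hi : i = n./2 by lia.
  by move: ne; rewrite hi eqxx.
rewrite mem_index_iota; lia.
Qed.


Definition G k n := undup (map canon [seq t <- trees_with_leaves n | (gamma t <= k)%N]).

Lemma wE n k : w n k = size (G k n).
Proof. by rewrite /w iso_classesE. Qed.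

Lemma memG k n c : (c \in G k n) = [&& canonical c, leaves c == n & (gamma c <= k)%N].
Proof.
rewrite mem_undup; apply/mapP/idP => [[t]|/and3P [cc ln gk]].
  rewrite mem_filter /trees_with_leaves mem_enumT // => /andP [gk ln] ->.
  by have [-> _ _ ->] := canon_props t; rewrite canon_canonical ln gk.
exists c; last by rewrite canonicalK.
by rewrite mem_filter /trees_with_leaves mem_enumT // ln gk.
Qed.

Lemma G_uniq k n : uniq (G k n).
Proof. exact: undup_uniq. Qed.

Lemma GL k i x : x \in G k i -> leaves x = i.
Proof. by rewrite memG => /and3P [_ /eqP -> _]. Qed.

Definition Ai k n i := flatten [seq [seq Node l r | r <- [seq r <- G k (n - i) | (pk l <= pk r)%N]] | l <- G k i].
Definition A k n := flatten [seq Ai k n i | i <- index_iota 1 n].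

Lemma size_flatten_map (S T : Type) (f : S -> seq T) s :
  size (flatten [seq f x | x <- s]) = \sum_(x <- s) size (f x).
Proof. by elim: s => [|x s IH]; rewrite ?big_nil ?big_cons //= size_cat IH. Qed.

Lemma count_sum (T : Type) (a : pred T) s : count a s = \sum_(x <- s) (a x : nat).
Proof. by elim: s => [|x s IH]; rewrite ?big_nil ?big_cons //= IH. Qed.

Lemma size_A k n : size (A k n) =
  \sum_(1 <= i < n) \sum_(l <- G k i) \sum_(r <- G k (n - i)) (pk l <= pk r : nat).
Proof.
rewrite /A size_flatten_map; apply: eq_bigr => i _.
rewrite /Ai size_flatten_map; apply: eq_bigr => l _.
by rewrite size_map size_filter count_sum.
Qed.

Lemma uniq_flatten_key (S U T : eqType) (key : T -> S) (s : seq S) (F : S -> seq T) :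
  uniq s -> (forall i, uniq (F i)) -> (forall i x, x \in F i -> key x = i) ->
  uniq (flatten [seq F i | i <- s]).
Proof.
move=> + Fu Fk; elim: s => [|i s IH] //= /andP [ni us].
rewrite cat_uniq Fu IH // andbT; apply/hasPn => x /flatten_mapP [j js xj].
apply/negP => xi; move: (Fk _ _ xi) (Fk _ _ xj) => -> ej.
by rewrite ej js in ni.
Qed.

Lemma A_uniq k n : uniq (A k n).
Proof.
apply: (@uniq_flatten_key _ nat _ (fun t => if t is Node l _ then leaves l else 0%N)).
- exact: iota_uniq.
- move=> i; apply: (@uniq_flatten_key _ nat _ (fun t => if t is Node l _ then l else Leaf)).
  + exact: G_uniq.
  + move=> l; rewrite map_inj_uniq ?filter_uniq ?G_uniq //.
    by move=> a b [].
  + by move=> l x /mapP [r _ ->].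
- by move=> i x /flatten_mapP [l /GL <- /mapP [r _ ->]].
Qed.

Definition childOK k (t : tree) :=
  if t is Node l r then (gamma l <= k)%N && (gamma r <= k)%N else false.

Lemma memA k n c : (c \in A k n) = [&& canonical c, leaves c == n & childOK k c].
Proof.
apply/flatten_mapP/idP => [[i]|].
  rewrite mem_index_iota => hi /flatten_mapP [l lG /mapP [r]].
  rewrite mem_filter => /andP [lr rG] ->.
  move: lG rG; rewrite !memG => /and3P [cl /eqP ll gl] /and3P [cr /eqP lr' gr].
  by rewrite /= cl cr lr gl gr ll lr'; apply/eqP; lia.
case: c => [|l r] /and3P [] //= /and3P [cl cr lr] /eqP ln /andP [gl gr].
exists (leaves l).
  by rewrite mem_index_iota; have := leaves_gt0 l; have := leaves_gt0 r; lia.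
apply/flatten_mapP; exists l; first by rewrite memG cl gl eqxx.
apply/mapP; exists r => //; rewrite mem_filter lr memG cr gr andbT /=.
by apply/eqP; lia.
Qed.


Fixpoint catp (m : nat) : tree :=
  match m with 0 => Leaf | m'.+1 => if m' is 0 then Leaf else Node Leaf (catp m') end.

Lemma catp_props m : (0 < m)%N -> leaves (catp m) = m /\ caterpillar (catp m).
Proof.
elim: m => [|[|m] IH] // _; have [h1 h2] := IH isT.
by move: h1 h2 => /= -> ->.
Qed.

Lemma catpS m : (0 < m)%N -> catp m.+1 = Node Leaf (catp m).
Proof. by case: m. Qed.

Lemma mkNC a b : mkN a b = mkN b a.
Proof.
rewrite /mkN; case: (ltngtP (pk a) (pk b)) => h //.
by rewrite (@pk_inj a b h).
Qed.

Lemma cat_canon t : caterpillar t -> canon t = canon (catp (leaves t)).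
Proof.
elim: t => //= l IHl r IHr /and3P [/orP [] + cl cr].
- case: l IHl cl => // _ _ _.
  by rewrite add1n catpS ?leaves_gt0 //= IHr.
- case: r IHr cr => // _ _ _.
  rewrite addn1 catpS ?leaves_gt0 //= IHl //. exact: mkNC.
Qed.

Lemma gamma_le t : (gamma t <= leaves t)%N.
Proof.
elim: t => [|l IHl r IHr]; first by rewrite gammaL.
rewrite gammaN geq_max; apply/andP; split; first by case: ifP.
rewrite geq_max; apply/andP; split => /=; lia.
Qed.

Lemma gamma_cat t : caterpillar t -> gamma t = leaves t.
Proof.
case: t => [|l r] ct; first by rewrite gammaL.
apply/eqP; rewrite eqn_leq gamma_le gammaN ct.
by rewrite leq_max leqnn.
Qed.

Definition bad k (t : tree) := caterpillar t && (k < leaves t)%N.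

Lemma count_bad k n : (1 <= k)%N -> count (bad k) (A k n) = (n == k.+1).
Proof.
move=> k1.
have badE : {in A k n, forall c, bad k c = (c == canon (catp k.+1))}.
  move=> c; rewrite memA => /and3P [cc /eqP ln ok]; apply/idP/eqP.
    move=> /andP [ct kl].
    have lc : leaves c = k.+1.
      move: ok ct kl; case: c {cc ln} => [|l r] //= /andP [gl gr] /and3P [/orP [] + cl cr] kl.
      + by case: l gl cl kl => //= _ _; have := gamma_cat _ cr; lia.
      + by case: r gr cr kl => //= _ _; have := gamma_cat _ cl; lia.
    by rewrite -(canonicalK _ cc) (cat_canon _ ct) lc.
  move=> ->; rewrite /bad; have [-> _ -> _] := canon_props (catp k.+1).
  have [h1 h2] := catp_props k.+1 isT. by rewrite h1 h2 ltnSn.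
rewrite (eq_in_count badE) count_uniq_mem ?A_uniq // memA.
have [-> _ _ _] := canon_props (catp k.+1).
have [-> _] := catp_props k.+1 isT.
rewrite canon_canonical catpS // eq_sym; case: eqP => //= _.
have g1 : (gamma (canon (catp k)) <= k)%N.
  have [_ _ _ ->] := canon_props (catp k).
  by have := gamma_le (catp k); have [-> _] := catp_props k k1.
by case: (mkN_cases Leaf (canon (catp k))) => -> /=; rewrite gammaL k1 g1.
Qed.


Lemma w0 k : w 0 k = 0%N.
Proof. by []. Qed.

Lemma w1 k : (1 <= k)%N -> w 1 k = 1%N.
Proof. by move=> k1; rewrite /w /trees_with_leaves /= gammaL k1. Qed.

Lemma w_rec n k : (1 <= k)%N -> (2 <= n)%N ->
  (2 * w n k + 2 * (n == k.+1) =
  \sum_(1 <= i < n) w i k * w (n - i) k + (if odd n then 0 else w n./2 k))%N.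
Proof.
move=> k1 n2.
have e1 : w n k = count (predC (bad k)) (A k n).
  rewrite wE -size_filter; apply: perm_size; apply: uniq_perm.
  - exact: G_uniq.
  - by rewrite filter_uniq ?A_uniq.
  move=> c; rewrite memG mem_filter memA.
  case: c => [|l r].
    have -> : (leaves Leaf == n) = false by apply/eqP => e; rewrite -e in n2.
    by rewrite !andbA !andbF.
  rewrite gammaN !geq_max /childOK.
  change (predC (bad k) (Node l r)) with (~~ (caterpillar (Node l r) && (k < leaves (Node l r))%N)).
  move: (leaves (Node l r) == n) (caterpillar (Node l r)) (leaves (Node l r))
        (canonical (Node l r)) (gamma l <= k)%N (gamma r <= k)%N => _ [] L [] [] [];
  by case: (L == n); case: (leqP L k).
have e2 : (w n k + (n == k.+1) = size (A k n))%N.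
  by rewrite e1 -(count_bad k n k1) addnC count_predC.
rewrite -mulnDr e2 size_A count_pairs; last 3 first.
- lia.
- exact: G_uniq.
- exact: GL.
by congr (_ + _); [apply: eq_bigr => i _; rewrite !wE | case: ifP => //; rewrite wE].
Qed.

Import GRing.Theory Num.Theory.
Local Open Scope ring_scope.

Lemma sumWW k n : (2 <= n)%N ->
  fps_mul (W k) (W k) n = (\sum_(1 <= i < n) w i k * w (n - i) k)%N%:R.
Proof.
move=> n2; rewrite /fps_mul natr_sum -(big_mkord xpredT (fun i => W k i * W k (n - i)%N)).
rewrite big_ltn // big_nat_recr /=; last lia.
rewrite /W w0 subnn w0 mul0r mulr0 add0r addr0.
by apply: eq_bigr => i _; rewrite natrM.
Qed.

Lemma P1 k (hk : (1 <= k)%N) n :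
  W k n = (n == 1%N)%:R + 2%:R^-1 * fps_mul (W k) (W k) n + 2%:R^-1 * fps_x2 (W k) n
          - (n == k.+1)%:R.
Proof.
case: n => [|[|n]].
- rewrite /fps_mul /fps_x2 /W big_ord_recl big_ord0 /= w0 !mulr0 !addr0. by [].
- rewrite /fps_mul /fps_x2 /W !big_ord_recl big_ord0 /= w0 w1 //.
  have -> : (1 == k.+1) = false by apply/eqP; lia.
  by rewrite !(mul0r, mul1r, mulr0, mulr1, addr0, add0r, mulr0n, subr0).
have h := w_rec n.+2 k hk isT.
rewrite sumWW // /fps_x2 /W.
have -> : (n.+2 == 1%N) = false by [].
have h' : 2%:R * (w n.+2 k)%:R + 2%:R * (n.+2 == k.+1)%:R =
   (\sum_(1 <= i < n.+2) w i k * w (n.+2 - i) k)%N%:R +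
   (if odd n.+2 then 0 else w n.+2./2 k)%:R :> rat.
  by rewrite -!natrM -!natrD h.
move: h'; case: ifP => _; rewrite ?add0r ?addr0 => h'; lra.
Qed.

Lemma dsum1 (f : nat -> rat) n : \sum_(i < n.+1) ((i : nat) == 0%N)%:R * f (n - i)%N = f n.
Proof.
rewrite big_ord_recl /= mul1r subn0 big1 ?addr0 // => i _.
by rewrite /bump /= mul0r.
Qed.

Lemma dsum2 (f : nat -> rat) n : \sum_(i < n.+1) f i * ((n - i)%N == 0%N)%:R = f n.
Proof.
rewrite big_ord_recr /= subnn mulr1 big1 ?add0r // => i _.
have -> : ((n - i)%N == 0%N) = false by apply/eqP; have := ltn_ord i; lia.
by rewrite mulr0.
Qed.

Lemma P2 k (hk : (1 <= k)%N) :
  is_fps_sqrt (fps_sub fps_one (W k)) (fps_sub fps_one (fps_scale 2%:R (phi k))).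
Proof.
split; first by rewrite /fps_sub /fps_one /fps_Xn /W w0 subr0.
move=> n; rewrite /fps_mul /fps_sub /fps_one /fps_Xn.
under eq_bigr => i _ do rewrite mulrBl !mulrBr.
rewrite !sumrB.
rewrite (dsum1 (fun m => (m == 0%N)%:R)) (dsum1 (W k)) (dsum2 (W k)).
have h := P1 k hk n.
rewrite /phi /fps_scale /fps_sub /fps_add /fps_Xn.
move: h; rewrite /fps_mul => h.
case: (n == 0%N) => /=; lra.
Qed.

Theorem mainTheorem12 (k : nat) (hk : (1 <= k)%N) :
  (forall n : nat,
     W k n =
     fps_sub (fps_add (fps_add (fps_Xn 1) (fps_scale (2%:R)^-1 (fps_mul (W k) (W k))))
                      (fps_scale (2%:R)^-1 (fps_x2 (W k))))
             (fps_Xn k.+1) n)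
  /\ is_fps_sqrt (fps_sub fps_one (W k))
                 (fps_sub fps_one (fps_scale 2%:R (phi k))).
Proof.
split; last exact: P2 k hk.
by move=> n; rewrite (P1 k hk n).
Qed.
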